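(* For every positive integer $n$, $Y_{2n}(4\pi)\neq0$.
   Context: $Y_k$ denotes the Bessel function of the second kind of integer order $k$. *)

(* Defs.v *)
From Stdlib Require Import Reals Arith ClassicalEpsilon.
Open Scope R_scope.

(* The limit of a real sequence, when it exists (chosen by classical
   description; junk value otherwise). *)
Definition seq_lim (u : nat -> R) : R :=
  epsilon (inhabits 0) (fun l => Un_cv u l).

Definition series (f : nat -> R) : R := seq_lim (fun N => sum_f_R0 f N).

(* fin_sum f n = f 0 + ... + f (n-1)  (empty sum = 0). *)
Definition fin_sum (f : nat -> R) (n : nat) : R :=
  match n with
  | O => 0
  | S p => sum_f_R0 f p
  end.

Definition harmonic (m : nat) : R :=
  match m with
  | O => 0
  | S p => sum_f_R0 (fun j => / INR (S j)) p
  end.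

Definition euler_gamma : R := seq_lim (fun m => harmonic m - ln (INR m)).

(* Digamma at positive integers: psi(m+1) = -gamma + H_m. *)
Definition digamma_succ (m : nat) : R := - euler_gamma + harmonic m.

Definition BesselJ (n : nat) (x : R) : R :=
  (x / 2) ^ n *
  series (fun k => (- (x ^ 2 / 4)) ^ k / (INR (fact k) * INR (fact (n + k)))).

(* Bessel function of the second kind Y_n of integer order n >= 0,
   for x > 0 (DLMF 10.8.1). *)
Definition BesselY (n : nat) (x : R) : R :=
  - ((/ (x / 2) ^ n) / PI) *
    fin_sum (fun k => INR (fact (n - k - 1)) / INR (fact k) * (x ^ 2 / 4) ^ k) n
  + 2 / PI * ln (x / 2) * BesselJ n x
  - ((x / 2) ^ n / PI) *
    series (fun k => (digamma_succ k + digamma_succ (n + k)) *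
                     (- (x ^ 2 / 4)) ^ k / (INR (fact k) * INR (fact (n + k)))).

(* Main.v *)
Require Import Defs.
From Stdlib Require Import Reals Lra Lia Psatz Arith ZArith QArith Qreals Qround Machin List ClassicalEpsilon.
Open Scope R_scope.

Lemma seq_lim_eq u l : Un_cv u l -> seq_lim u = l.
Proof. intros H. unfold seq_lim. apply UL_sequence with u; [|exact H].
  apply epsilon_spec. exists l; exact H. Qed.

Lemma series_eq f l : Un_cv (fun N => sum_f_R0 f N) l -> series f = l.
Proof. intros H; unfold series; apply seq_lim_eq; exact H. Qed.

Lemma cv_shift u l K : Un_cv u l -> Un_cv (fun p => u (K+p)%nat) l.
Proof. intros H e He. destruct (H e He) as [N HN]. exists N. intros n Hn.
  apply HN. lia. Qed.

Lemma cv_const c : Un_cv (fun _ => c) c.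
Proof. intros e He. exists O. intros n _. unfold R_dist. rewrite Rminus_diag, Rabs_R0; lra. Qed.

Lemma abs_le_bt x c : Rabs x <= c -> -c <= x <= c.
Proof. unfold Rabs; destruct Rcase_abs; lra. Qed.
Lemma bt_abs_le x c : -c <= x <= c -> Rabs x <= c.
Proof. unfold Rabs; destruct Rcase_abs; lra. Qed.

Section Tail.
Variable f : nat -> R.
Variable K : nat.
Hypothesis Hr : forall k, (K <= k)%nat -> Rabs (f (S k)) <= Rabs (f k) / 2.

Lemma tail_step : forall k p, (K <= k)%nat ->
  Rabs (sum_f_R0 f (k+p) - sum_f_R0 f k) <= 2*Rabs (f (S k)) - 2*Rabs (f (S (k+p))).
Proof. intros k p Hk. induction p.
 - rewrite Nat.add_0_r. replace (_ - _) with 0 by ring. rewrite Rabs_R0; lra.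
 - rewrite Nat.add_succ_r.
   change (sum_f_R0 f (S (k+p))) with (sum_f_R0 f (k+p) + f (S (k+p))).
   replace (sum_f_R0 f (k+p) + f (S (k+p)) - sum_f_R0 f k) with ((sum_f_R0 f (k+p) - sum_f_R0 f k) + f (S (k+p))) by ring.
   pose proof (Rabs_triang (sum_f_R0 f (k+p) - sum_f_R0 f k) (f (S (k+p)))).
   pose proof (Hr (S (k+p)) ltac:(lia)). lra.
Qed.

Lemma tail_decay : forall j, Rabs (f (S (K+j))) <= Rabs (f (S K)) * (/2)^j.
Proof. induction j.
 - rewrite Nat.add_0_r; simpl; lra.
 - rewrite Nat.add_succ_r. pose proof (Hr (S (K+j)) ltac:(lia)). simpl pow. lra.
Qed.

Lemma tail_cauchy : Cauchy_crit (sum_f_R0 f).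
Proof. intros e He.
  set (c := Rabs (f (S K))).
  assert (Hc : 0 <= c) by apply Rabs_pos.
  assert (Ha : Rabs (/2) < 1) by (rewrite Rabs_right; lra).
  destruct (pow_lt_1_zero (/2) Ha (e/(2*c+1))) as [N0 HN0].
  { apply Rdiv_lt_0_compat; lra. }
  exists (K+N0)%nat. intros n m Hn Hm.
  assert (key : forall a b, (K+N0 <= a)%nat -> (a <= b)%nat -> R_dist (sum_f_R0 f b) (sum_f_R0 f a) < e).
  { intros a b Ha1 Hab. replace b with (a + (b-a))%nat by lia.
    unfold R_dist. pose proof (tail_step a (b-a) ltac:(lia)).
    pose proof (Rabs_pos (f (S (a + (b-a))))).
    pose proof (tail_decay (a-K)) as Hd.
    replace (K + (a-K))%nat with a in Hd by lia.
    pose proof (HN0 (a-K)%nat ltac:(lia)) as Hp.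
    rewrite Rabs_right in Hp by (apply Rle_ge, pow_le; lra).
    assert (c * (/2)^(a-K) <= c * (e/(2*c+1))) by (apply Rmult_le_compat_l; lra).
    assert (c * (e/(2*c+1)) * 2 < e).
    { assert (Hq : e/(2*c+1) * (2*c+1) = e) by (field; lra).
      assert (0 < e/(2*c+1)) by (apply Rdiv_lt_0_compat; lra). nra. }
    fold c in Hd. lra. }
  destruct (Nat.le_ge_cases n m).
  - rewrite R_dist_sym. apply key; lia.
  - apply key; lia.
Qed.

Lemma tail_bound : exists l, Un_cv (sum_f_R0 f) l /\
  Rabs (l - sum_f_R0 f K) <= 2 * Rabs (f (S K)).
Proof.
  destruct (R_complete _ tail_cauchy) as [l Hl]. exists l. split; [exact Hl|].
  pose proof (cv_shift _ _ K Hl) as Hs.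
  assert (B : forall p, Rabs (sum_f_R0 f (K+p) - sum_f_R0 f K) <= 2 * Rabs (f (S K))).
  { intros p. pose proof (tail_step K p (le_n _)). pose proof (Rabs_pos (f (S (K+p)))). lra. }
  assert (l <= sum_f_R0 f K + 2 * Rabs (f (S K))).
  { eapply Rle_cv_lim; [ | exact Hs | apply cv_const]. intros p; simpl.
    specialize (B p). apply abs_le_bt in B. lra. }
  assert (sum_f_R0 f K - 2 * Rabs (f (S K)) <= l).
  { eapply Rle_cv_lim; [ | apply cv_const | exact Hs]. intros p; simpl.
    specialize (B p). apply abs_le_bt in B. lra. }
  apply bt_abs_le. lra.
Qed.
End Tail.

Definition aT (m:nat) (x:R) k := (- (x ^ 2 / 4)) ^ k / (INR (fact k) * INR (fact (m + k))).
Definition cT m x k := (harmonic k + harmonic (m+k)) * aT m x k.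
Definition S1 m x := fin_sum (fun k => INR (fact (m - k - 1)) / INR (fact k) * (x ^ 2 / 4) ^ k) m.

Lemma Y_identity m x A C : 0 < x ->
  Un_cv (sum_f_R0 (aT m x)) A -> Un_cv (sum_f_R0 (cT m x)) C ->
  BesselY m x * (PI * (x/2)^m) = - S1 m x + (x^2/4)^m * (2 * (ln (x/2) + euler_gamma) * A - C).
Proof.
  intros Hx HA HC.
  assert (HB : Un_cv (sum_f_R0 (fun k => (digamma_succ k + digamma_succ (m + k)) *
                     (- (x ^ 2 / 4)) ^ k / (INR (fact k) * INR (fact (m + k))))) (- 2 * euler_gamma * A + C)).
  { eapply Un_cv_ext.
    2:{ apply CV_plus; [apply CV_mult; [apply cv_const | exact HA] | exact HC]. }
    intros N. cbv beta. rewrite scal_sum, <- plus_sum. apply sum_eq. intros i _.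
    unfold digamma_succ, cT, aT. field.
    split; apply INR_fact_neq_0. }
  unfold BesselY, BesselJ. rewrite (series_eq (fun k => (- (x^2/4))^k / (INR (fact k) * INR (fact (m+k)))) A HA), (series_eq _ _ HB).
  fold (S1 m x).
  assert (Hh : (x/2)^m <> 0) by (apply pow_nonzero; lra).
  assert (Hz : (x^2/4)^m = (x/2)^m * (x/2)^m).
  { rewrite <- Rpow_mult_distr. f_equal. field. }
  rewrite Hz. pose proof PI_RGT_0. field. split; lra.
Qed.

Definition SC : Z := (2^40)%Z.
Definition sR := IZR SC.
Lemma SC_pos : (0 < SC)%Z. Proof. reflexivity. Qed.
Lemma sR_pos : 0 < sR. Proof. unfold sR. apply IZR_lt. exact SC_pos. Qed.

Definition I := (Z*Z)%type.
Definition cont (i : I) (x : R) := IZR (fst i) <= x * sR <= IZR (snd i).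

Definition iadd (a b : I) : I := (fst a + fst b, snd a + snd b)%Z.
Definition ineg (a : I) : I := (- snd a, - fst a)%Z.
Definition rdn (a : Z) := (a / SC)%Z.
Definition rup (a : Z) := (- ((- a) / SC))%Z.
Definition imul (a b : I) : I :=
  let p1 := (fst a * fst b)%Z in let p2 := (fst a * snd b)%Z in
  let p3 := (snd a * fst b)%Z in let p4 := (snd a * snd b)%Z in
  (rdn (Z.min (Z.min p1 p2) (Z.min p3 p4)), rup (Z.max (Z.max p1 p2) (Z.max p3 p4))).
Definition idiv (a : I) (d : Z) : I := ((fst a / d)%Z, (- ((- snd a) / d))%Z).
Definition inat (n : Z) : I := (n * SC, n * SC)%Z.
Definition maxabs (a : I) := Z.max (Z.abs (fst a)) (Z.abs (snd a)).
Definition iwiden (a : I) (t : Z) : I := (fst a - 2 * t, snd a + 2 * t)%Z.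

Lemma cont_add a b x y : cont a x -> cont b y -> cont (iadd a b) (x+y).
Proof. unfold cont, iadd; simpl. rewrite !plus_IZR. lra. Qed.

Lemma cont_neg a x : cont a x -> cont (ineg a) (-x).
Proof. unfold cont, ineg; simpl. rewrite !opp_IZR. lra. Qed.

Lemma div_floor_le a d : (0 < d)%Z -> IZR (a / d) * IZR d <= IZR a.
Proof. intros Hd. rewrite <- mult_IZR. apply IZR_le.
  rewrite Z.mul_comm. apply Z.mul_div_le. exact Hd. Qed.

Lemma div_ceil_ge a d : (0 < d)%Z -> IZR a <= IZR (- ((- a) / d)) * IZR d.
Proof. intros Hd. rewrite <- mult_IZR. apply IZR_le.
  pose proof (Z.mul_div_le (-a) d Hd). lia. Qed.

Lemma cont_div a x d : (0 < d)%Z -> cont a x -> cont (idiv a d) (x / IZR d).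
Proof. intros Hd [H1 H2]. unfold idiv, cont; simpl.
  pose proof (div_floor_le (fst a) d Hd). pose proof (div_ceil_ge (snd a) d Hd).
  assert (0 < IZR d) by (apply IZR_lt; exact Hd).
  split.
  - apply Rmult_le_reg_r with (IZR d); auto.
    replace (x / IZR d * sR * IZR d) with (x * sR) by (field; lra). lra.
  - apply Rmult_le_reg_r with (IZR d); auto.
    replace (x / IZR d * sR * IZR d) with (x * sR) by (field; lra). lra.
Qed.

Lemma corner_lo a1 a2 c1 c2 X Y m : a1 <= X <= a2 -> c1 <= Y <= c2 ->
  m <= a1*c1 -> m <= a1*c2 -> m <= a2*c1 -> m <= a2*c2 -> m <= X*Y.
Proof. intros [] [] ? ? ? ?.
  destruct (Rle_dec 0 Y); destruct (Rle_dec 0 a1); destruct (Rle_dec 0 a2); nra. Qed.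

Lemma corner_hi a1 a2 c1 c2 X Y m : a1 <= X <= a2 -> c1 <= Y <= c2 ->
  a1*c1 <= m -> a1*c2 <= m -> a2*c1 <= m -> a2*c2 <= m -> X*Y <= m.
Proof. intros [] [] ? ? ? ?.
  destruct (Rle_dec 0 Y); destruct (Rle_dec 0 a1); destruct (Rle_dec 0 a2); nra. Qed.

Lemma cont_mul a b x y : cont a x -> cont b y -> cont (imul a b) (x*y).
Proof. intros Ha Hb. unfold cont, imul in *; simpl.
  destruct a as [a1 a2]; destruct b as [c1 c2]; simpl in *.
  pose proof sR_pos.
  pose proof (div_floor_le (Z.min (Z.min (a1*c1) (a1*c2)) (Z.min (a2*c1) (a2*c2))) SC SC_pos).
  pose proof (div_ceil_ge (Z.max (Z.max (a1*c1) (a1*c2)) (Z.max (a2*c1) (a2*c2))) SC SC_pos).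
  fold sR in H0, H1. unfold rdn, rup.
  assert (L : IZR (Z.min (Z.min (a1*c1) (a1*c2)) (Z.min (a2*c1) (a2*c2))) <= (x*sR)*(y*sR)).
  { apply (corner_lo (IZR a1) (IZR a2) (IZR c1) (IZR c2)); auto; rewrite <- mult_IZR; apply IZR_le; lia. }
  assert (U : (x*sR)*(y*sR) <= IZR (Z.max (Z.max (a1*c1) (a1*c2)) (Z.max (a2*c1) (a2*c2)))).
  { apply (corner_hi (IZR a1) (IZR a2) (IZR c1) (IZR c2)); auto; rewrite <- mult_IZR; apply IZR_le; lia. }
  split.
  - apply Rmult_le_reg_r with sR; auto. nra.
  - apply Rmult_le_reg_r with sR; auto. nra.
Qed.

Lemma cont_inat n : cont (inat n) (IZR n).
Proof. unfold cont, inat, sR; simpl. rewrite mult_IZR. lra. Qed.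

Lemma cont_abs w u : cont w u -> Rabs u * sR <= IZR (maxabs w).
Proof. intros [H1 H2]. unfold maxabs. pose proof sR_pos.
  assert (IZR (Z.abs (fst w)) <= IZR (Z.max (Z.abs (fst w)) (Z.abs (snd w)))) by (apply IZR_le; lia).
  assert (IZR (Z.abs (snd w)) <= IZR (Z.max (Z.abs (fst w)) (Z.abs (snd w)))) by (apply IZR_le; lia).
  rewrite !abs_IZR in *.
  rewrite <- (Rabs_right sR) by lra. rewrite <- Rabs_mult.
  unfold Rabs in *; destruct Rcase_abs; destruct Rcase_abs; destruct Rcase_abs; lra.
Qed.

Lemma cont_widen a w x y u : cont a y -> cont w u -> Rabs (x - y) <= 2 * Rabs u ->
  cont (iwiden a (maxabs w)) x.
Proof. intros [H1 H2] Hw Hd. pose proof (cont_abs _ _ Hw). pose proof sR_pos.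
  unfold iwiden, cont; cbn [fst snd]. rewrite ?minus_IZR, ?plus_IZR, ?mult_IZR.
  apply abs_le_bt in Hd.
  assert (Rabs u * sR * 2 >= (x - y) * sR /\ - (Rabs u * sR * 2) <= (x-y)*sR) by (split; nra).
  lra.
Qed.

Lemma cont_weak a b l h x : cont a l -> cont b h -> l <= x <= h -> cont (fst a, snd b) x.
Proof. unfold cont; simpl. pose proof sR_pos. intros [] [] []. split; nra. Qed.

Definition isign (r : I) : bool := (Z.ltb (snd r) 0 || Z.ltb 0 (fst r))%bool.

Lemma isign_sound r v : cont r v -> isign r = true -> v <> 0.
Proof. unfold cont, isign. intros [H1 H2] Hs Hv. subst v. rewrite Rmult_0_l in *.
  apply Bool.orb_true_iff in Hs. destruct Hs as [Hs|Hs]; apply Z.ltb_lt in Hs;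
  apply IZR_lt in Hs; lra. Qed.

Fixpoint zfact (n : nat) : Z := match n with O => 1%Z | S p => (Z.of_nat (S p) * zfact p)%Z end.
Lemma zfact_INR n : IZR (zfact n) = INR (fact n).
Proof. induction n. reflexivity.
  change (zfact (S n)) with (Z.of_nat (S n) * zfact n)%Z.
  rewrite mult_IZR, IHn, <- INR_IZR_INZ. change (fact (S n)) with (S n * fact n)%nat.
  rewrite mult_INR. reflexivity. Qed.

Lemma INR_Z n : IZR (Z.of_nat n) = INR n.
Proof. symmetry; apply INR_IZR_INZ. Qed.

Lemma fin_sum_S f k : fin_sum f (S k) = fin_sum f k + f k.
Proof. destruct k; simpl. ring. reflexivity. Qed.

Lemma harmonic_S j : harmonic (S j) = harmonic j + / INR (S j).
Proof. destruct j. unfold harmonic. simpl. lra. reflexivity. Qed.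

Lemma harmonic_ge0 j : 0 <= harmonic j.
Proof. induction j. simpl; lra. rewrite harmonic_S.
  pose proof (lt_0_INR (S j) (Nat.lt_0_succ j)). pose proof (Rinv_0_lt_compat _ H). lra. Qed.

Lemma harmonic_ge1 j : (1 <= j)%nat -> 1 <= harmonic j.
Proof. intros Hj. induction Hj. simpl. lra. rewrite harmonic_S.
  pose proof (lt_0_INR (S m) (Nat.lt_0_succ m)). pose proof (Rinv_0_lt_compat _ H). lra. Qed.

Lemma harmonic_S_le j : harmonic (S j) <= harmonic j + 1.
Proof. rewrite harmonic_S. assert (1 <= INR (S j)) by (apply (le_INR 1); lia).
  assert (/ INR (S j) <= 1). { rewrite <- Rinv_1. apply Rinv_le_contravar; lra. } lra. Qed.

Definition tS m x k := INR (fact (m - k - 1)) / INR (fact k) * (x ^ 2 / 4) ^ k.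

Lemma tS_succ m x k : (S k < m)%nat ->
  tS m x (S k) = tS m x k * (x^2/4) / (INR (S k) * INR (m-k-1)).
Proof. intros H. unfold tS. destruct (m - k - 1)%nat eqn:E. lia.
  replace (m - S k - 1)%nat with n by lia.
  change (fact (S n)) with (S n * fact n)%nat. change (fact (S k)) with (S k * fact k)%nat.
  rewrite !mult_INR. simpl pow.
  pose proof (INR_fact_neq_0 n). pose proof (INR_fact_neq_0 k).
  pose proof (not_0_INR (S n) ltac:(lia)). pose proof (not_0_INR (S k) ltac:(lia)).
  field. auto.
Qed.

Fixpoint s1loop (m : nat) (Zi : I) (fuel k : nat) (t s : I) : I :=
  match fuel with
  | O => s
  | S f => let t' := idiv (imul t Zi) (Z.of_nat (S k) * Z.of_nat (m - k - 1)) in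
           s1loop m Zi f (S k) t' (iadd s t')
  end.

Lemma s1loop_eq m Zi f k t s : s1loop m Zi (S f) k t s =
  s1loop m Zi f (S k) (idiv (imul t Zi) (Z.of_nat (S k) * Z.of_nat (m - k - 1)))
    (iadd s (idiv (imul t Zi) (Z.of_nat (S k) * Z.of_nat (m - k - 1)))).
Proof. reflexivity. Qed.

Lemma s1loop_sound m x Zi : cont Zi (x^2/4) -> forall fuel k t s, (k + fuel < m)%nat ->
  cont t (tS m x k) -> cont s (fin_sum (tS m x) (S k)) ->
  cont (s1loop m Zi fuel k t s) (fin_sum (tS m x) (S (k + fuel))).
Proof. intros HZ fuel. induction fuel; intros k t s Hk Ht Hs.
  - rewrite Nat.add_0_r. exact Hs.
  - rewrite s1loop_eq. rewrite Nat.add_succ_r. apply (IHfuel (S k)). lia.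
    + rewrite tS_succ by lia.
      replace (INR (S k) * INR (m-k-1)) with (IZR (Z.of_nat (S k) * Z.of_nat (m-k-1))) by (rewrite mult_IZR, !INR_Z; ring).
      apply cont_div. apply Z.mul_pos_pos; lia. apply cont_mul; auto.
    + rewrite fin_sum_S. apply cont_add; auto.
      rewrite tS_succ by lia.
      replace (INR (S k) * INR (m-k-1)) with (IZR (Z.of_nat (S k) * Z.of_nat (m-k-1))) by (rewrite mult_IZR, !INR_Z; ring).
      apply cont_div. apply Z.mul_pos_pos; lia. apply cont_mul; auto.
Qed.

Definition S1i m Zi := let t0 := inat (zfact (m-1)) in s1loop m Zi (m-1) 0 t0 t0.

Lemma S1i_sound m x Zi : (1 <= m)%nat -> cont Zi (x^2/4) -> cont (S1i m Zi) (S1 m x).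
Proof. intros Hm HZ. unfold S1i, S1.
  assert (E : tS m x 0 = IZR (zfact (m-1))).
  { unfold tS. rewrite zfact_INR. simpl. replace (m-0-1)%nat with (m-1)%nat by lia. field. }
  assert (H := s1loop_sound m x Zi HZ (m-1) 0 (inat (zfact (m-1))) (inat (zfact (m-1))) ltac:(lia)).
  replace (S (0 + (m-1)))%nat with m in H by lia. apply H.
  rewrite E. apply cont_inat.
  simpl. rewrite E. apply cont_inat.
Qed.

Fixpoint bloop (Zi : I) (fuel j : nat) (b : I) : I :=
  match fuel with O => b | S f => bloop Zi f (S j) (idiv (imul b Zi) (Z.of_nat (S j))) end.

Lemma bloop_eq Zi f j b : bloop Zi (S f) j b = bloop Zi f (S j) (idiv (imul b Zi) (Z.of_nat (S j))).
Proof. reflexivity. Qed.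

Lemma bloop_sound x Zi : cont Zi (x^2/4) -> forall fuel j b,
  cont b ((x^2/4)^j / INR (fact j)) -> cont (bloop Zi fuel j b) ((x^2/4)^(j+fuel) / INR (fact (j+fuel))).
Proof. intros HZ fuel; induction fuel; intros j b Hb.
  - rewrite Nat.add_0_r; exact Hb.
  - rewrite bloop_eq. rewrite Nat.add_succ_r. apply (IHfuel (S j)).
    replace ((x^2/4)^(S j) / INR (fact (S j))) with ((x^2/4)^j / INR (fact j) * (x^2/4) / IZR (Z.of_nat (S j))).
    apply cont_div. lia. apply cont_mul; auto.
    rewrite INR_Z. change (fact (S j)) with (S j * fact j)%nat. rewrite mult_INR. simpl pow.
    pose proof (INR_fact_neq_0 j). pose proof (not_0_INR (S j) ltac:(lia)). field. auto.
Qed.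

Fixpoint hloop (fuel j : nat) (h : I) : I :=
  match fuel with O => h | S f => hloop f (S j) (iadd h (idiv (inat 1) (Z.of_nat (S j)))) end.

Lemma cont_inv_nat j : cont (idiv (inat 1) (Z.of_nat (S j))) (/ INR (S j)).
Proof. replace (/ INR (S j)) with (IZR 1 / IZR (Z.of_nat (S j))).
  apply cont_div. lia. apply cont_inat. rewrite INR_Z. simpl IZR. field.
  apply not_0_INR; lia. Qed.

Lemma hloop_eq f j h : hloop (S f) j h = hloop f (S j) (iadd h (idiv (inat 1) (Z.of_nat (S j)))).
Proof. reflexivity. Qed.

Lemma hloop_sound : forall fuel j h, cont h (harmonic j) -> cont (hloop fuel j h) (harmonic (j + fuel)).
Proof. induction fuel; intros j h Hh.
  - rewrite Nat.add_0_r; exact Hh.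
  - rewrite hloop_eq. rewrite Nat.add_succ_r. apply (IHfuel (S j)).
    rewrite harmonic_S. apply cont_add; auto. apply cont_inv_nat.
Qed.

Lemma cont_zero : cont (0%Z, 0%Z) 0.
Proof. unfold cont; simpl. lra. Qed.

Lemma aT_succ m x k : aT m x (S k) = - (aT m x k * (x^2/4) / (INR (S k) * INR (S (m + k)))).
Proof. unfold aT. rewrite Nat.add_succ_r.
  change (fact (S k)) with (S k * fact k)%nat. change (fact (S (m+k))) with (S (m+k) * fact (m+k))%nat.
  rewrite !mult_INR. simpl pow.
  pose proof (INR_fact_neq_0 k). pose proof (INR_fact_neq_0 (m+k)).
  pose proof (not_0_INR (S k) ltac:(lia)). pose proof (not_0_INR (S (m+k)) ltac:(lia)).
  field. auto.
Qed.

Lemma ratio_a m x k : 2 * (x^2/4) <= INR (S k) * INR (S (m + k)) ->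
  Rabs (aT m x (S k)) <= Rabs (aT m x k) / 2.
Proof. intros H. rewrite aT_succ, Rabs_Ropp.
  assert (0 < INR (S k)) by (apply lt_0_INR; lia).
  assert (0 < INR (S (m+k))) by (apply lt_0_INR; lia).
  assert (0 <= x^2/4) by (pose proof (pow2_ge_0 x); lra).
  set (z := x^2/4) in *.
  set (D := INR (S k) * INR (S (m+k))) in *.
  assert (0 < D) by (unfold D; nra).
  unfold Rdiv. rewrite !Rabs_mult, (Rabs_right z) by lra.
  rewrite (Rabs_right (/D)) by (apply Rle_ge, Rlt_le, Rinv_0_lt_compat; lra).
  pose proof (Rabs_pos (aT m x k)).
  assert (z * / D <= /2).
  { apply Rmult_le_reg_r with (2*D). lra. replace (z*/D*(2*D)) with (2*z) by (field; lra).
    replace (/2*(2*D)) with D by field. lra. }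
  rewrite Rmult_assoc. apply Rmult_le_compat_l; lra.
Qed.

Lemma ratio_c m x k : (1 <= m)%nat -> 6 * (x^2/4) <= INR (S k) * INR (S (m + k)) ->
  Rabs (cT m x (S k)) <= Rabs (cT m x k) / 2.
Proof. intros Hm H. unfold cT. rewrite !Rabs_mult.
  assert (Hk0 := harmonic_ge0 k). assert (Hk1 := harmonic_S_le k).
  assert (Hmk1 : 1 <= harmonic (m+k)) by (apply harmonic_ge1; lia).
  assert (Hmk2 := harmonic_S_le (m+k)). rewrite <- Nat.add_succ_r in Hmk2.
  assert (H0 := harmonic_ge0 (S k)). assert (H1 := harmonic_ge0 (m + S k)).
  rewrite !Rabs_right by lra.
  rewrite aT_succ, Rabs_Ropp.
  assert (0 < INR (S k)) by (apply lt_0_INR; lia).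
  assert (0 < INR (S (m+k))) by (apply lt_0_INR; lia).
  assert (0 <= x^2/4) by (pose proof (pow2_ge_0 x); lra).
  set (z := x^2/4) in *.
  set (D := INR (S k) * INR (S (m+k))) in *.
  assert (0 < D) by (unfold D; nra).
  unfold Rdiv. rewrite !Rabs_mult, (Rabs_right z) by lra.
  rewrite (Rabs_right (/D)) by (apply Rle_ge, Rlt_le, Rinv_0_lt_compat; lra).
  set (a := Rabs (aT m x k)). assert (0 <= a) by apply Rabs_pos.
  set (hs := harmonic k + harmonic (m+k)).
  assert (harmonic (S k) + harmonic (m + S k) <= 3 * hs) by (unfold hs; lra).
  assert (z * / D <= /6).
  { apply Rmult_le_reg_r with (6*D). lra. replace (z*/D*(6*D)) with (6*z) by (field; lra).
    replace (/6*(6*D)) with D by field. lra. }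
  assert (0 <= z*/D) by (apply Rmult_le_pos; [lra| apply Rlt_le, Rinv_0_lt_compat; lra]).
  assert (0 <= hs) by (unfold hs; lra).
  replace (a * (z) * /D) with (a * (z*/D)) by ring.
  assert ((harmonic (S k) + harmonic (m + S k)) * (a * (z*/D)) <= 3 * hs * (a * / 6)).
  { apply Rmult_le_compat; try nra. }
  rewrite Rabs_right by lra. lra.
Qed.

Definition st5 := (I * I * I * I * I)%type.

Fixpoint mloop (m : nat) (Zi : I) (fuel k : nat) (st : st5) : st5 :=
  match fuel with
  | O => st
  | S f => match st with (b, hk, hmk, sa, sc) =>
      mloop m Zi f (S k)
        (ineg (idiv (imul b Zi) (Z.of_nat (S k) * Z.of_nat (S (m + k)))),
         iadd hk (idiv (inat 1) (Z.of_nat (S k))),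
         iadd hmk (idiv (inat 1) (Z.of_nat (S (m + k)))),
         iadd sa b,
         iadd sc (imul b (iadd hk hmk)))
      end
  end.

Lemma mloop_eq m Zi f k b hk hmk sa sc : mloop m Zi (S f) k (b, hk, hmk, sa, sc) =
      mloop m Zi f (S k)
        (ineg (idiv (imul b Zi) (Z.of_nat (S k) * Z.of_nat (S (m + k)))),
         iadd hk (idiv (inat 1) (Z.of_nat (S k))),
         iadd hmk (idiv (inat 1) (Z.of_nat (S (m + k)))),
         iadd sa b,
         iadd sc (imul b (iadd hk hmk))).
Proof. reflexivity. Qed.

Definition minv m x k (st : st5) : Prop :=
  match st with (b, hk, hmk, sa, sc) =>
    cont b (aT m x k * (x^2/4)^m) /\ cont hk (harmonic k) /\ cont hmk (harmonic (m + k)) /\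
    cont sa (fin_sum (fun j => aT m x j * (x^2/4)^m) k) /\
    cont sc (fin_sum (fun j => cT m x j * (x^2/4)^m) k)
  end.

Lemma mloop_sound m x Zi : cont Zi (x^2/4) -> forall fuel k st,
  minv m x k st -> minv m x (k + fuel) (mloop m Zi fuel k st).
Proof. intros HZ fuel; induction fuel; intros k st Hst.
  - rewrite Nat.add_0_r; exact Hst.
  - destruct st as [[[[b hk] hmk] sa] sc]. rewrite mloop_eq. rewrite Nat.add_succ_r.
    apply (IHfuel (S k)). destruct Hst as (Hb & Hh & Hhm & Hsa & Hsc).
    split; [|split; [|split; [|split]]].
    + rewrite aT_succ.
      replace (- (aT m x k * (x ^ 2 / 4) / (INR (S k) * INR (S (m + k)))) * (x ^ 2 / 4) ^ m)
        with (- (aT m x k * (x ^ 2 / 4) ^ m * (x^2/4) / IZR (Z.of_nat (S k) * Z.of_nat (S (m + k)))))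
        by (rewrite mult_IZR, !INR_Z; field; split; apply not_0_INR; lia).
      apply cont_neg. apply cont_div. apply Z.mul_pos_pos; lia. apply cont_mul; auto.
    + rewrite harmonic_S. apply cont_add; auto. apply cont_inv_nat.
    + rewrite Nat.add_succ_r, harmonic_S. apply cont_add; auto. apply cont_inv_nat.
    + rewrite fin_sum_S. apply cont_add; auto.
    + rewrite fin_sum_S. apply cont_add; auto.
      replace (cT m x k * (x^2/4)^m) with (aT m x k * (x^2/4)^m * (harmonic k + harmonic (m+k))) by (unfold cT; ring).
      apply cont_mul; auto. apply cont_add; auto.
Qed.

Definition Kc := 45%nat.

Definition eval (m : nat) (Zi Li : I) : I :=
  let s1 := S1i m Zi in
  let b0 := bloop Zi m 0 (inat 1) in
  let hm := hloop m 0 (0%Z, 0%Z) in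
  match mloop m Zi (S Kc) 0 (b0, (0%Z,0%Z), hm, (0%Z,0%Z), (0%Z,0%Z)) with
  | (b, hk, hmk, sa, sc) =>
    iadd (ineg s1) (iadd (imul (imul Li (inat 2)) (iwiden sa (maxabs b)))
                         (ineg (iwiden sc (maxabs (imul b (iadd hk hmk))))))
  end.

Lemma big_index k : (Kc <= k)%nat -> 2116 <= INR (S k) * INR (S k).
Proof. intros H. assert (46 <= INR (S k)). { replace 46 with (INR 46). apply le_INR. unfold Kc in H; lia.
  simpl. ring. } nra. Qed.

Lemma eval_sound m x Zi Li L : (1 <= m)%nat -> 0 <= x^2/4 <= 40 ->
  cont Zi (x^2/4) -> cont Li L ->
  exists A C, Un_cv (sum_f_R0 (aT m x)) A /\ Un_cv (sum_f_R0 (cT m x)) C /\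
    cont (eval m Zi Li) (- S1 m x + (x^2/4)^m * (2 * L * A - C)).
Proof.
  intros Hm Hz HZ HL.
  assert (Hprod : forall k, (Kc <= k)%nat -> 240 <= INR (S k) * INR (S (m + k))).
  { intros k Hk. pose proof (big_index k Hk). assert (INR (S k) <= INR (S (m+k))) by (apply le_INR; lia).
    assert (0 <= INR (S k)) by apply pos_INR. nra. }
  destruct (tail_bound (aT m x) Kc) as [A [HA HtA]].
  { intros k Hk. apply ratio_a. pose proof (Hprod k Hk). lra. }
  destruct (tail_bound (cT m x) Kc) as [C [HC HtC]].
  { intros k Hk. apply ratio_c. exact Hm. pose proof (Hprod k Hk). lra. }
  exists A, C. split; [exact HA|]. split; [exact HC|].
  set (zm := (x^2/4)^m).
  assert (Hzm : 0 <= zm) by (apply pow_le; lra).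
  assert (Hb0 : cont (bloop Zi m 0 (inat 1)) (aT m x 0 * zm)).
  { pose proof (bloop_sound x Zi HZ m 0 (inat 1)) as H. simpl plus in H.
    replace (aT m x 0 * zm) with ((x^2/4)^m / INR (fact m)).
    apply H. replace ((x^2/4)^0 / INR (fact 0)) with (IZR 1) by (simpl; field). apply cont_inat.
    unfold aT, zm. rewrite Nat.add_0_r. simpl. field. apply INR_fact_neq_0. }
  assert (Hhm : cont (hloop m 0 (0%Z,0%Z)) (harmonic (m + 0))).
  { rewrite Nat.add_0_r. apply (hloop_sound m 0). simpl harmonic. apply cont_zero. }
  assert (Hinv : minv m x 0 (bloop Zi m 0 (inat 1), (0%Z,0%Z), hloop m 0 (0%Z,0%Z), (0%Z,0%Z), (0%Z,0%Z))).
  { unfold minv. split; [exact Hb0|]. split; [apply cont_zero|]. split; [exact Hhm|].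
    split; simpl; apply cont_zero. }
  pose proof (mloop_sound m x Zi HZ (S Kc) 0 _ Hinv) as Hm2.
  unfold eval.
  destruct (mloop m Zi (S Kc) 0 _) as [[[[b hk] hmk] sa] sc].
  simpl plus in Hm2. destruct Hm2 as (Hb & Hh & Hhm' & Hsa & Hsc).
  fold zm in Hb, Hsa, Hsc.
  assert (HAi : cont (iwiden sa (maxabs b)) (A * zm)).
  { eapply cont_widen; [exact Hsa | exact Hb |].
    change (fin_sum (fun j => aT m x j * zm) (S Kc)) with (sum_f_R0 (fun j => aT m x j * zm) Kc).
    rewrite <- scal_sum. replace (A * zm - zm * sum_f_R0 (aT m x) Kc) with (zm * (A - sum_f_R0 (aT m x) Kc)) by ring.
    rewrite Rabs_mult, (Rabs_mult (aT m x (S Kc))), (Rabs_right zm) by lra. nra. }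
  assert (HCu : cont (imul b (iadd hk hmk)) (cT m x (S Kc) * zm)).
  { replace (cT m x (S Kc) * zm) with (aT m x (S Kc) * zm * (harmonic (S Kc) + harmonic (m + S Kc))) by (unfold cT; ring).
    apply cont_mul; auto. apply cont_add; auto. }
  assert (HCi : cont (iwiden sc (maxabs (imul b (iadd hk hmk)))) (C * zm)).
  { eapply cont_widen; [exact Hsc | exact HCu |].
    change (fin_sum (fun j => cT m x j * zm) (S Kc)) with (sum_f_R0 (fun j => cT m x j * zm) Kc).
    rewrite <- scal_sum. replace (C * zm - zm * sum_f_R0 (cT m x) Kc) with (zm * (C - sum_f_R0 (cT m x) Kc)) by ring.
    rewrite Rabs_mult, (Rabs_mult (cT m x (S Kc))), (Rabs_right zm) by lra. nra. }
  replace (- S1 m x + zm * (2 * L * A - C)) with (- S1 m x + (L * IZR 2 * (A * zm) + - (C * zm))) by (simpl; ring).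
  apply cont_add. apply cont_neg. apply S1i_sound; auto.
  apply cont_add. apply cont_mul; auto. apply cont_mul; auto. apply cont_inat.
  apply cont_neg; auto.
Qed.

Fixpoint qpow (q:Q) (n:nat) : Q := match n with O => 1%Q | S p => (q * qpow q p)%Q end.
Definition qtg (n : nat) : Q :=
  (2 * qpow (1#3) (2*n+1) / inject_Z (Z.of_nat (2*n+1)) + qpow (1#7) (2*n+1) / inject_Z (Z.of_nat (2*n+1)))%Q.
Definition qalt n := (qpow (-1) n * qtg n)%Q.
Fixpoint qsum n := match n with O => qalt 0 | S p => (qsum p + qalt (S p))%Q end.

Lemma Q2R_qpow q n : Q2R (qpow q n) = (Q2R q)^n.
Proof. induction n; simpl qpow. unfold Q2R; simpl; field. rewrite Q2R_mult, IHn. reflexivity. Qed.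

Lemma Q2R_injZ z : Q2R (inject_Z z) = IZR z.
Proof. unfold Q2R; simpl; field. Qed.

Lemma qsum_ok n : Q2R (qsum n) = sum_f_R0 (tg_alt PI_2_3_7_tg) n.
Proof.
  assert (Ht : forall k, Q2R (qalt k) = tg_alt PI_2_3_7_tg k).
  { intros k. unfold qalt, qtg, tg_alt, PI_2_3_7_tg, Ratan_seq.
    assert (Hk : ~ (inject_Z (Z.of_nat (2*k+1)) == 0)%Q).
    { intro Hq; unfold Qeq in Hq; simpl in Hq; lia. }
    rewrite Q2R_mult, Q2R_plus, !Q2R_div by exact Hk.
    rewrite Q2R_mult, !Q2R_qpow, !Q2R_injZ, INR_Z.
    replace (Q2R (-1)) with (-1) by (unfold Q2R; simpl; field).
    replace (Q2R 2) with 2 by (unfold Q2R; simpl; field).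
    replace (Q2R (1#3)) with (/3) by (unfold Q2R; simpl; field).
    replace (Q2R (1#7)) with (/7) by (unfold Q2R; simpl; field).
    field. apply not_0_INR. lia. }
  induction n. simpl. apply Ht. simpl qsum. rewrite Q2R_plus, IHn, Ht. reflexivity.
Qed.

Definition NPI := 6%nat.
Definition PIi : I := (Qfloor (4 * qsum (S (2*NPI)) * inject_Z SC), Qceiling (4 * qsum (2*NPI) * inject_Z SC)).

Lemma cont_PI : cont PIi PI.
Proof. pose proof (PI_2_3_7_ineq NPI) as [H1 H2]. rewrite <- !qsum_ok in *.
  unfold cont, PIi; cbn [fst snd]. unfold sR.
  pose proof (Qfloor_le (4 * qsum (S (2*NPI)) * inject_Z SC)) as F1.
  pose proof (Qle_ceiling (4 * qsum (2*NPI) * inject_Z SC)) as F2.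
  apply Qle_Rle in F1. apply Qle_Rle in F2.
  rewrite !Q2R_mult, Q2R_injZ in F1, F2. rewrite Q2R_injZ in F1, F2.
  replace (Q2R 4) with 4 in F1, F2 by (unfold Q2R; simpl; field).
  pose proof sR_pos. unfold sR in H.
  split; nra.
Qed.

Definition Zi : I := imul (imul PIi PIi) (inat 4).
Lemma cont_Zi : cont Zi ((4*PI)^2/4).
Proof. replace ((4*PI)^2/4) with (PI * PI * IZR 4) by (simpl; field).
  unfold Zi. apply cont_mul. apply cont_mul; apply cont_PI. apply cont_inat. Qed.

Definition Li : I := (fst (idiv (inat 23) 10), snd (idiv (inat 25) 10)).
Lemma cont_Li L : 23/10 <= L <= 25/10 -> cont Li L.
Proof. intros H. unfold Li. eapply cont_weak.
  apply cont_div. lia. apply cont_inat. apply cont_div. lia. apply cont_inat. exact H. Qed.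

Definition check_all := List.forallb (fun n => isign (eval (2*n) Zi Li)) (List.seq 1 14).

Lemma PI_bounds : 314/100 <= PI <= 315/100.
Proof. pose proof (PI_2_3_7_ineq 1) as H. unfold tg_alt, PI_2_3_7_tg, Ratan_seq in H.
  simpl in H. lra. Qed.

Lemma ln_le' a b : 0 < a -> a <= b -> ln a <= ln b.
Proof. intros Ha Hab. destruct (Rle_lt_or_eq_dec _ _ Hab) as [H|H].
  apply Rlt_le, ln_increasing; auto. subst; lra. Qed.

Lemma ln_ratio_lo n : (1 <= n)%nat -> / INR (S n) <= ln (INR (S n)) - ln (INR n).
Proof. intros Hn. assert (H1 : 1 <= INR n) by (apply (le_INR 1); lia).
  rewrite S_INR in *.
  pose proof (exp_ineq1_le (- / (INR n + 1))).
  assert (INR n / (INR n + 1) = 1 + - / (INR n + 1)) by (field; lra).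
  assert (ln (INR n / (INR n + 1)) <= - / (INR n + 1)).
  { rewrite <- (ln_exp (- / (INR n + 1))). apply ln_le'. apply Rdiv_lt_0_compat; lra. lra. }
  unfold Rdiv in H2. rewrite ln_mult, ln_Rinv in H2 by (try apply Rinv_0_lt_compat; lra). lra.
Qed.

Lemma ln_ratio_hi n : (1 <= n)%nat -> ln (INR (S n)) - ln (INR n) <= / INR n.
Proof. intros Hn. assert (H1 : 1 <= INR n) by (apply (le_INR 1); lia).
  rewrite S_INR in *.
  pose proof (exp_ineq1_le (/ INR n)).
  assert ((INR n + 1) / INR n = 1 + / INR n) by (field; lra).
  assert (ln ((INR n + 1) / INR n) <= / INR n).
  { rewrite <- (ln_exp (/ INR n)). apply ln_le'. apply Rdiv_lt_0_compat; lra. lra. }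
  unfold Rdiv in H2. rewrite ln_mult, ln_Rinv in H2 by (try apply Rinv_0_lt_compat; lra). lra.
Qed.

Definition gu n := harmonic n - ln (INR n).
Definition gv n := harmonic n - ln (INR (S n)).

Lemma gu_dec n : (1 <= n)%nat -> gu (S n) <= gu n.
Proof. intros Hn. unfold gu. rewrite harmonic_S. pose proof (ln_ratio_lo n Hn). lra. Qed.

Lemma gv_inc n : (1 <= n)%nat -> gv n <= gv (S n).
Proof. intros Hn. unfold gv. rewrite harmonic_S. pose proof (ln_ratio_hi (S n) ltac:(lia)). lra. Qed.

Lemma gv_le_gu n : (1 <= n)%nat -> gv n <= gu n.
Proof. intros Hn. unfold gu, gv. assert (0 < INR n) by (apply lt_0_INR; lia).
  assert (ln (INR n) <= ln (INR (S n))) by (apply ln_le'; auto; apply le_INR; lia). lra. Qed.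

Lemma gu_chain n p : (1 <= n)%nat -> gu (n + p) <= gu n.
Proof. intros Hn. induction p. rewrite Nat.add_0_r; lra.
  rewrite Nat.add_succ_r. pose proof (gu_dec (n+p) ltac:(lia)). lra. Qed.

Lemma gv_chain n p : (1 <= n)%nat -> gv n <= gv (n + p).
Proof. intros Hn. induction p. rewrite Nat.add_0_r; lra.
  rewrite Nat.add_succ_r. pose proof (gv_inc (n+p) ltac:(lia)). lra. Qed.

Lemma gamma_bounds N : (1 <= N)%nat -> gv N <= euler_gamma <= gu N.
Proof. intros HN.
  set (w := fun n => gu (S n)).
  assert (Hd : Un_decreasing w). { intros n. unfold w. apply gu_dec. lia. }
  assert (Hb : has_lb w).
  { exists (- gv 1). intros y [n ->]. unfold w.
    pose proof (gv_le_gu (S n) ltac:(lia)). pose proof (gv_chain 1 n (le_n 1)). simpl in *. unfold opp_seq. lra. }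
  destruct (decreasing_cv w Hd Hb) as [l Hl].
  assert (Hu : Un_cv (fun m => harmonic m - ln (INR m)) l).
  { intros e He. destruct (Hl e He) as [M HM]. exists (S M). intros n Hn.
    destruct n. lia. apply (HM n). lia. }
  unfold euler_gamma. rewrite (seq_lim_eq _ _ Hu).
  pose proof (cv_shift _ _ N Hl) as Hs.
  split.
  - eapply Rle_cv_lim; [ | apply cv_const | exact Hs]. intros p. simpl. unfold w.
    pose proof (gv_le_gu (S (N+p)) ltac:(lia)). pose proof (gv_chain N (S p) HN).
    rewrite Nat.add_succ_r in H0. lra.
  - eapply Rle_cv_lim; [ | exact Hs | apply cv_const]. intros p. simpl. unfold w.
    pose proof (gu_chain N (S p) HN). rewrite Nat.add_succ_r in H. lra.
Qed.

Lemma exp_pow_n n y : exp (INR n * y) = exp y ^ n.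
Proof. induction n. simpl. rewrite Rmult_0_l, exp_0. reflexivity.
  rewrite S_INR, Rmult_plus_distr_r, Rmult_1_l, exp_plus, IHn. simpl. ring. Qed.

Lemma H10 : harmonic 10 = 7381/2520.
Proof. unfold harmonic. simpl. field. Qed.

Lemma L_bounds : 23/10 <= ln ((4*PI)/2) + euler_gamma <= 25/10.
Proof.
  pose proof (gamma_bounds 10 ltac:(lia)) as [G1 G2]. unfold gu, gv in *. rewrite H10 in *.
  pose proof PI_bounds.
  replace ((4*PI)/2) with (2*PI) by field.
  assert (E1 : exp (62/100) >= 1816/1000).
  { replace (62/100) with (INR 8 * (775/10000)) by (simpl; field). rewrite exp_pow_n.
    pose proof (exp_ineq1_le (775/10000)).
    assert ((1 + 775/10000)^8 <= exp (775/10000) ^ 8) by (apply pow_incr; lra).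
    assert ((1 + 775/10000)^8 >= 1816/1000) by (simpl; lra). lra. }
  assert (E2 : exp (-44/100) >= 635/1000).
  { replace (-44/100) with (INR 8 * (-55/1000)) by (simpl; field). rewrite exp_pow_n.
    pose proof (exp_ineq1_le (-55/1000)).
    assert ((1 + -55/1000)^8 <= exp (-55/1000) ^ 8) by (apply pow_incr; lra).
    assert ((1 + -55/1000)^8 >= 635/1000) by (simpl; lra). lra. }
  assert (P11 : 0 < INR 11) by (apply lt_0_INR; lia).
  assert (P10 : 0 < INR 10) by (apply lt_0_INR; lia).
  assert (Lo : ln (INR 11) - 62/100 <= ln (2*PI)).
  { assert (INR 11 * exp (- (62/100)) <= 2 * PI).
    { rewrite exp_Ropp. replace (INR 11) with 11 by (simpl; ring).
      assert (0 < exp (62/100)) by apply exp_pos.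
      apply Rmult_le_reg_r with (exp (62/100)); auto. rewrite Rmult_assoc, Rinv_l by lra. nra. }
    pose proof (ln_le' _ _ (Rmult_lt_0_compat _ _ P11 (exp_pos _)) H0).
    rewrite ln_mult, ln_exp in H1 by (auto; apply exp_pos). lra. }
  assert (Hi : ln (2*PI) <= ln (INR 10) - 44/100).
  { assert (2 * PI <= INR 10 * exp (-44/100)).
    { replace (INR 10) with 10 by (simpl; ring). lra. }
    pose proof (ln_le' (2*PI) _ ltac:(lra) H0).
    rewrite (ln_mult (INR 10)), ln_exp in H1 by (auto; apply exp_pos). lra. }
  lra.
Qed.

Lemma harmonic_le j : harmonic j <= INR j.
Proof. induction j. simpl; lra. pose proof (harmonic_S_le j). rewrite S_INR. lra. Qed.

Lemma sum_ge_first f n : (forall k, 0 <= f k) -> f 0%nat <= sum_f_R0 f n.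
Proof. intros H. induction n. simpl; lra. simpl. pose proof (H (S n)). lra. Qed.

Lemma E_bound : sum_f_R0 (fun k => 40^k / INR (fact k)) 8 <= 3 * 10^8.
Proof. rewrite (sum_eq _ (fun k => 40^k / IZR (zfact k))) by (intros; rewrite zfact_INR; reflexivity).
  simpl sum_f_R0. simpl zfact. lra. Qed.


Lemma growth p : 40^(30+p) * (3*10^8) * (2 * INR (30+p) + 42) < INR (fact (29+p)) * INR (fact (30+p)).
Proof. induction p.
  - rewrite <- !zfact_INR, <- mult_IZR. simpl plus.
    replace (INR 30) with (IZR 30) by (rewrite INR_IZR_INZ; reflexivity).
    assert (E1 : 3*10^8 = IZR 300000000) by ring.
    assert (E2 : 2 * IZR 30 + 42 = IZR 102) by ring.
    rewrite E1, E2, (pow_IZR 40 30), <- !mult_IZR.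
    apply IZR_lt. vm_compute. reflexivity.
  - assert (E1: (29 + S p)%nat = S (29 + p)) by lia.
    assert (E2: (30 + S p)%nat = S (30 + p)) by lia.
    assert (E3: S (29 + p) = (30 + p)%nat) by lia.
    rewrite E1, E2, !fact_simpl, !mult_INR, <- tech_pow_Rmult, S_INR, E3.
    set (a := INR (30+p)) in *. set (F1 := INR (fact (29+p))) in *. set (F2 := INR (fact (30+p))) in *.
    assert (30 <= a) by (unfold a; replace 30 with (INR 30) by (simpl; ring); apply le_INR; lia).
    assert (0 < F1) by apply INR_fact_lt_0. assert (0 < F2) by apply INR_fact_lt_0.
    set (P := 40^(30+p)) in *. assert (0 < P) by (unfold P; apply pow_lt; lra).
    set (T := 3 * 10^8) in *. assert (0 < T) by (unfold T; lra).
    assert (Hx : 40 * P * T * (2 * (a+1) + 42) <= 80 * (P * T * (2*a+42))).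
    { assert (0 < P * T) by nra. nra. }
    assert (80 * (F1 * F2) <= a * F1 * ((a + 1) * F2)).
    { assert (0 < F1 * F2) by nra. assert (80 <= a * (a+1)) by nra. nra. }
    lra.
Qed.

Lemma aT_bound m x k : 0 <= x^2/4 <= 40 ->
  Rabs (aT m x k) <= 40^k / INR (fact k) * / INR (fact m).
Proof. intros Hz. unfold aT. set (z := x^2/4) in *.
  pose proof (INR_fact_lt_0 k). pose proof (INR_fact_lt_0 (m+k)). pose proof (INR_fact_lt_0 m).
  assert (INR (fact m) <= INR (fact (m+k))) by (apply le_INR, fact_le; lia).
  unfold Rdiv. rewrite Rabs_mult, Rabs_inv, <- RPow_abs, Rabs_Ropp, (Rabs_right z) by lra.
  rewrite (Rabs_right (INR (fact k) * INR (fact (m+k)))) by nra.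
  assert (z^k <= 40^k) by (apply pow_incr; lra).
  assert (0 <= z^k) by (apply pow_le; lra).
  assert (/ (INR (fact k) * INR (fact (m+k))) <= / INR (fact k) * / INR (fact m)).
  { rewrite <- Rinv_mult. apply Rinv_le_contravar; nra. }
  assert (0 <= / (INR (fact k) * INR (fact (m+k)))) by (apply Rlt_le, Rinv_0_lt_compat; nra).
  assert (0 <= / INR (fact k) * / INR (fact m)) by (apply Rmult_le_pos; apply Rlt_le, Rinv_0_lt_compat; lra).
  replace (40 ^ k * / INR (fact k) * / INR (fact m)) with (40^k * (/ INR (fact k) * / INR (fact m))) by ring.
  apply Rmult_le_compat; auto.
Qed.

Lemma cT_bound m x k : 0 <= x^2/4 <= 40 -> (k <= 8)%nat ->
  Rabs (cT m x k) <= (INR m + 16) * (40^k / INR (fact k) * / INR (fact m)).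
Proof. intros Hz Hk. unfold cT. rewrite Rabs_mult.
  pose proof (harmonic_ge0 k). pose proof (harmonic_ge0 (m+k)).
  rewrite Rabs_right by lra.
  pose proof (harmonic_le k). pose proof (harmonic_le (m+k)). rewrite plus_INR in H2.
  assert (INR k <= 8) by (replace 8 with (INR 8) by (simpl; ring); apply le_INR; lia).
  pose proof (aT_bound m x k Hz). pose proof (Rabs_pos (aT m x k)).
  apply Rmult_le_compat; lra.
Qed.

Lemma large_case m x L : (30 <= m)%nat -> 0 <= x^2/4 <= 40 -> 0 <= L <= 25/10 ->
  exists A C, Un_cv (sum_f_R0 (aT m x)) A /\ Un_cv (sum_f_R0 (cT m x)) C /\
    - S1 m x + (x^2/4)^m * (2 * L * A - C) < 0.
Proof.
  intros Hm Hz HL.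
  assert (Hprod : forall k, (7 <= k)%nat -> 240 <= INR (S k) * INR (S (m + k))).
  { intros k Hk. assert (8 <= INR (S k)) by (replace 8 with (INR 8) by (simpl; ring); apply le_INR; lia).
    assert (38 <= INR (S (m+k))) by (replace 38 with (INR 38) by (simpl; ring); apply le_INR; lia). nra. }
  destruct (tail_bound (aT m x) 7) as [A [HA HtA]].
  { intros k Hk. apply ratio_a. pose proof (Hprod k Hk). lra. }
  destruct (tail_bound (cT m x) 7) as [C [HC HtC]].
  { intros k Hk. apply ratio_c. lia. pose proof (Hprod k Hk). lra. }
  exists A, C. split; [exact HA|]. split; [exact HC|].
  set (F := / INR (fact m)). assert (HF : 0 < F) by (apply Rinv_0_lt_compat, INR_fact_lt_0).
  set (E := sum_f_R0 (fun k => 40^k / INR (fact k)) 8).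
  assert (HE : E <= 3 * 10^8) by apply E_bound.
  assert (HE0 : 0 <= E).
  { unfold E. apply cond_pos_sum. intros k. apply Rmult_le_pos. apply pow_le; lra.
    apply Rlt_le, Rinv_0_lt_compat, INR_fact_lt_0. }
  assert (HAb : Rabs A <= 2 * (E * F)).
  { assert (S8 : sum_f_R0 (fun k => Rabs (aT m x k)) 8 <= F * E).
    { unfold E. rewrite scal_sum. apply sum_Rle. intros k _. apply aT_bound; auto. }
    change (sum_f_R0 (fun k => Rabs (aT m x k)) 8) with (sum_f_R0 (fun k => Rabs (aT m x k)) 7 + Rabs (aT m x 8)) in S8.
    pose proof (sum_f_R0_triangle (aT m x) 7).
    pose proof (Rabs_triang (A - sum_f_R0 (aT m x) 7) (sum_f_R0 (aT m x) 7)).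
    replace (A - sum_f_R0 (aT m x) 7 + sum_f_R0 (aT m x) 7) with A in H0 by ring.
    pose proof (Rabs_pos (aT m x 8)).
    assert (0 <= sum_f_R0 (fun k => Rabs (aT m x k)) 7) by (apply cond_pos_sum; intros; apply Rabs_pos).
    rewrite (Rmult_comm E F). lra. }
  assert (HCb : Rabs C <= 2 * ((INR m + 16) * (E * F))).
  { assert (S8 : sum_f_R0 (fun k => Rabs (cT m x k)) 8 <= (INR m + 16) * (F * E)).
    { unfold E. rewrite scal_sum, scal_sum. apply sum_Rle. intros k Hk.
      pose proof (cT_bound m x k Hz Hk). fold F in H. rewrite Rmult_comm. exact H. }
    change (sum_f_R0 (fun k => Rabs (cT m x k)) 8) with (sum_f_R0 (fun k => Rabs (cT m x k)) 7 + Rabs (cT m x 8)) in S8.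
    pose proof (sum_f_R0_triangle (cT m x) 7).
    pose proof (Rabs_triang (C - sum_f_R0 (cT m x) 7) (sum_f_R0 (cT m x) 7)).
    replace (C - sum_f_R0 (cT m x) 7 + sum_f_R0 (cT m x) 7) with C in H0 by ring.
    pose proof (Rabs_pos (cT m x 8)).
    assert (0 <= sum_f_R0 (fun k => Rabs (cT m x k)) 7) by (apply cond_pos_sum; intros; apply Rabs_pos).
    rewrite (Rmult_comm E F). lra. }
  assert (HS1 : INR (fact (m-1)) <= S1 m x).
  { unfold S1, fin_sum. destruct m as [|m']. lia.
    apply Rle_trans with (tS (S m') x 0).
    { unfold tS. simpl. replace (m' - 0)%nat with m' by lia. lra. }
    apply (sum_ge_first (tS (S m') x)). intros k. unfold tS. apply Rmult_le_pos. apply Rmult_le_pos. apply pos_INR.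
    apply Rlt_le, Rinv_0_lt_compat, INR_fact_lt_0. apply pow_le; lra. }
  set (z := x^2/4) in *.
  assert (Hzm : 0 <= z^m <= 40^m) by (split; [apply pow_le | apply pow_incr]; lra).
  assert (HV : z^m * (2*L*A - C) <= 40^m * (E * F * (2 * INR m + 42))).
  { assert (2*L*A - C <= 2 * L * Rabs A + Rabs C).
    { pose proof (Rle_abs A). pose proof (Rle_abs (-C)). rewrite Rabs_Ropp in H0.
      assert (2*L*A <= 2*L*Rabs A) by nra. lra. }
    assert (2 * L * Rabs A + Rabs C <= E * F * (2 * INR m + 42)).
    { pose proof (Rabs_pos A). assert (2*L*Rabs A <= 5 * Rabs A) by nra.
      set (G := E * F) in *. lra. }
    assert (0 <= E * F * (2 * INR m + 42)).
    { apply Rmult_le_pos; [apply Rmult_le_pos; lra | pose proof (pos_INR m); lra]. }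
    assert (z^m * (2*L*A - C) <= z^m * (E * F * (2 * INR m + 42))) by (apply Rmult_le_compat_l; lra).
    assert (z^m * (E * F * (2 * INR m + 42)) <= 40^m * (E * F * (2 * INR m + 42))) by (apply Rmult_le_compat_r; lra).
    lra. }
  pose proof (growth (m - 30)) as G.
  replace (30 + (m - 30))%nat with m in G by lia. replace (29 + (m - 30))%nat with (m - 1)%nat in G by lia.
  assert (HG : 40^m * (E * F * (2 * INR m + 42)) < INR (fact (m-1))).
  { pose proof (INR_fact_lt_0 m). pose proof (INR_fact_lt_0 (m-1)).
    assert (F * INR (fact m) = 1) by (unfold F; field; lra).
    assert (0 < 40^m) by (apply pow_lt; lra). pose proof (pos_INR m).
    assert (40^m * (E * (2 * INR m + 42)) <= 40^m * (3*10^8) * (2 * INR m + 42)).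
    { rewrite Rmult_assoc. apply Rmult_le_compat_l. lra. apply Rmult_le_compat_r; lra. }
    assert (40^m * (E * F * (2 * INR m + 42)) * INR (fact m) < INR (fact (m-1)) * INR (fact m)).
    { replace (40^m * (E * F * (2 * INR m + 42)) * INR (fact m)) with (40^m * (E * (2 * INR m + 42)) * (F * INR (fact m))) by ring.
      rewrite H1. lra. }
    apply Rmult_lt_reg_r with (INR (fact m)); auto. }
  lra.
Qed.

Lemma check_ok : check_all = true.
Proof. vm_compute. reflexivity. Qed.

Theorem lemma6p1 : forall n : nat, (1 <= n)%nat -> BesselY (2 * n) (4 * PI) <> 0.
Proof.
  intros n Hn HY.
  pose proof PI_bounds as HP.
  assert (Hx : 0 < 4 * PI) by lra.
  assert (Hz : 0 <= (4*PI)^2/4 <= 40) by (simpl; nra).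
  pose proof L_bounds as HL.
  assert (Hh : 0 < PI * ((4*PI)/2)^(2*n)) by (apply Rmult_lt_0_compat; [lra | apply pow_lt; lra]).
  destruct (le_lt_dec n 14) as [Hs|Hb].
  - assert (Hc : isign (eval (2*n) Zi Li) = true).
    { pose proof check_ok as C. unfold check_all in C. rewrite forallb_forall in C.
      apply C. apply in_seq. lia. }
    destruct (eval_sound (2*n) (4*PI) Zi Li (ln ((4*PI)/2) + euler_gamma) ltac:(lia) Hz cont_Zi
      (cont_Li _ HL)) as (A & C & HA & HC & Hv).
    pose proof (Y_identity (2*n) (4*PI) A C Hx HA HC) as Hid.
    rewrite HY, Rmult_0_l in Hid.
    apply (isign_sound _ _ Hv Hc). rewrite <- Hid. reflexivity.
  - destruct (large_case (2*n) (4*PI) (ln ((4*PI)/2) + euler_gamma) ltac:(lia) Hz ltac:(lra))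
      as (A & C & HA & HC & Hv).
    pose proof (Y_identity (2*n) (4*PI) A C Hx HA HC) as Hid.
    rewrite HY, Rmult_0_l in Hid. lra.
Qed.
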